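(* In the setting below, let $I\subseteq\{0,\dots,n\}$ and $J\subseteq\{0,\dots,m\}$ be intervals of equal length such that every point of $I\times J$ is $2\Delta$-relevant, where $\Delta\ge1$. Then the sumset $\{(i,f(i)) : i\in I\}+\{(j,g(j)) : j\in J\}\subseteq\mathbb{Z}^2$ has size $O(\Delta\cdot(|I|+|J|))$.
   Context: Setting: $f\colon\{0,\dots,n\}\to\mathbb{Z}$, $g\colon\{0,\dots,m\}\to\mathbb{Z}$, and convex functions $\breve f\colon\{0,\dots,n\}\to\mathbb{Q}$, $\breve g\colon\{0,\dots,m\}\to\mathbb{Q}$ (convex: $F(i)-F(i-1)\le F(i+1)-F(i)$ for interior $i$) with $\breve f\le f\le\breve f+\Delta$ and $\breve g\le g\le\breve g+\Delta$ pointwise. Let $\breve h(k)=\min_{i+j=k}\breve f(i)+\breve g(j)$. A point $(i,j)$ is $\delta$-relevant if $\breve f(i)+\breve g(j)\le\breve h(i+j)+\delta$. The sumset of $A,B\subseteq\mathbb{Z}^2$ is $A+B=\{a+b : a\in A,b\in B\}$ with componentwise addition. *)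

(* Defs.v *)
From HB Require Import structures.
From mathcomp Require Import all_boot all_order all_algebra.
Set Implicit Arguments. Unset Strict Implicit. Unset Printing Implicit Defensive.
Import Order.TTheory GRing.Theory Num.Theory.
Local Open Scope ring_scope.

(* A function F : {0,...,n} -> rat is represented by F : nat -> rat, only its
   values on 0..n matter. Convexity: F(i)-F(i-1) <= F(i+1)-F(i) for 0<i<n. *)
Definition convex_on (n : nat) (F : nat -> rat) : Prop :=
  forall i : nat, (0 < i)%N -> (i < n)%N ->
    F i - F i.-1 <= F i.+1 - F i.

(* The default of the big min is the candidate i = minn k n, which is a valid
   candidate whenever k <= n+m (the only case in which hbreve is used). *)
Definition hbreve (n m : nat) (bf bg : nat -> rat) (k : nat) : rat :=
  \big[Order.min/(bf (minn k n) + bg (k - minn k n)%N)]_(i < n.+1 |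
      (i <= k)%N && (k - i <= m)%N) (bf i + bg (k - i)%N).

Definition relevant (n m : nat) (bf bg : nat -> rat) (delta : rat) (i j : nat) : Prop :=
  bf i + bg j <= hbreve n m bf bg (i + j) + delta.

Definition sumset (A B : seq (int * int)) : seq (int * int) :=
  undup [seq (a.1 + b.1, a.2 + b.2) | a <- A, b <- B].

Definition graph_on (f : nat -> int) (a len : nat) : seq (int * int) :=
  [seq ((i%:Z), f i) | i <- iota a len].

(* Main.v *)
Require Import Defs.
From HB Require Import structures.
From mathcomp Require Import all_boot all_order all_algebra.
From mathcomp Require Import ring lra zify.
Import Order.TTheory GRing.Theory Num.Theory.
Local Open Scope ring_scope.

Lemma bigmin_le_term (I : eqType) (r : seq I) (P : pred I) (F : I -> rat) x0 i :
  i \in r -> P i -> \big[Order.min/x0]_(j <- r | P j) F j <= F i.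
Proof.
elim: r => // j r IH; rewrite inE big_cons; case/orP=> [/eqP <-|Hi] Pi.
  by rewrite Pi ge_min lexx.
case: (P j); last exact: IH.
by rewrite ge_min IH ?orbT.
Qed.

Lemma hbreve_le n m bf bg i j : (i <= n)%N -> (j <= m)%N ->
  hbreve n m bf bg (i + j) <= bf i + bg j.
Proof.
move=> Hi Hj; rewrite /hbreve.
have Hi' : (i < n.+1)%N by [].
have := @bigmin_le_term _ (index_enum 'I_n.+1)
  (fun k : 'I_n.+1 => (k <= i + j)%N && (i + j - k <= m)%N)
  (fun k : 'I_n.+1 => bf k + bg (i + j - k)%N)
  (bf (minn (i + j) n) + bg (i + j - minn (i + j) n)%N) (Ordinal Hi')
  (mem_index_enum _).
rewrite /= addKn leq_addr Hj => /(_ isT) //.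
Qed.

Theorem mainTheorem15 :
  exists C : rat, 0 < C /\
  forall (n m : nat) (f g : nat -> int) (bf bg : nat -> rat) (Delta : rat)
         (a b len : nat),
    convex_on n bf -> convex_on m bg ->
    (forall i : nat, (i <= n)%N -> bf i <= (f i)%:~R <= bf i + Delta) ->
    (forall j : nat, (j <= m)%N -> bg j <= (g j)%:~R <= bg j + Delta) ->
    1 <= Delta ->
    (a + len <= n.+1)%N -> (b + len <= m.+1)%N ->
    (forall i j : nat, (a <= i < a + len)%N -> (b <= j < b + len)%N ->
       relevant n m bf bg (2 * Delta) i j) ->
    (size (sumset (graph_on f a len) (graph_on g b len)))%:R
      <= C * Delta * (len + len)%:R.
Proof.
exists 6; split => //.
move=> n m f g bf bg D a b len _ _ Hf Hg HD Ha Hb Hrel.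
set H := hbreve n m bf bg.
set K := Num.floor (4 * D) + 2.
have K0 : 0 <= K by rewrite /K addr_ge0 // floor_ge0; lra.
set N := `|K|%N.
have NK : (N%:R : rat) = K%:~R by rewrite /N -[in RHS](gez0_abs K0).
have ND : (N%:R : rat) <= 6 * D.
  rewrite NK /K intrD.
  have := floor_le (4 * D); lra.
pose L := [seq ((k%:Z), Num.floor (H k) + t%:Z) | k <- iota (a + b) (len + len), t <- iota 0 N].
have sub : {subset sumset (graph_on f a len) (graph_on g b len) <= L}.
  move=> x; rewrite mem_undup => /allpairsP [[p q] [/= /mapP [i Hi ->] /mapP [j Hj ->] ->]] /=.
  move: Hi Hj; rewrite !mem_iota => /andP [Hi1 Hi2] /andP [Hj1 Hj2].
  have Hin : (i <= n)%N by lia.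
  have Hjm : (j <= m)%N by lia.
  have := Hrel i j ltac:(lia) ltac:(lia); rewrite /relevant -/H => Hr.
  have Hl := @hbreve_le n m bf bg i j Hin Hjm; rewrite -/H in Hl.
  have := Hf i Hin; have := Hg j Hjm => /andP [g1 g2] /andP [f1 f2].
  set z := Num.floor (H (i + j)%N).
  have z1 := floor_le (H (i + j)%N).
  have z2 := floorD1_gt (H (i + j)%N).
  rewrite -/z in z1 z2.
  set t := f i + g j - z.
  have t0 : 0 <= t.
    rewrite -(ler_int rat) /t !intrD intrN; rewrite intrD in z2; lra.
  have tK : t < K.
    rewrite -(ltr_int rat) /t /K !intrD intrN.
    have := floorD1_gt (4 * D); rewrite intrD; lra.
  apply/allpairsP; exists ((i + j)%N, `|t|%N) => /=; split.
  - rewrite mem_iota; lia.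
  - rewrite mem_iota /= add0n /N; lia.
  - rewrite gez0_abs // /t PoszD; congr (_, _); ring.
have := uniq_leq_size (undup_uniq _) sub.
rewrite size_allpairs !size_iota -(ler_nat rat) => /le_trans; apply.
by rewrite natrM mulrC ler_wpM2r.
Qed.
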